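(* For every simple game $v$ on $n\ge 2$ players and every player $i$ that is not a dictator in $v$, we have $\mathrm{BZI}_i(v)\le\frac{2^{n-1}-1}{2^{n-1}+n-2}$.
   Context: A simple game on $N=\{1,\dots,n\}$ is a surjective, monotone map $v\colon 2^N\to\{0,1\}$ (monotone: $v(S)\le v(T)$ whenever $S\subseteq T$). Player $j$ is a null player if $v(S)=v(S\cup\{j\})$ for all $S\subseteq N\setminus\{j\}$; player $i$ is a dictator if $v(\{i\})=1$ and all other players are null players. Penrose–Banzhaf index: with $\psi_j(v)=\sum_{S\subseteq N\setminus\{j\}}(v(S\cup\{j\})-v(S))$, $\mathrm{BZI}_i(v)=\psi_i(v)/\sum_{j\in N}\psi_j(v)$. *)

(* Defs.v *)
From mathcomp Require Import all_boot all_order all_algebra.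
Set Implicit Arguments. Unset Strict Implicit. Unset Printing Implicit Defensive.
Import GRing.Theory Num.Theory.

(* A game on players 'I_n (= {1..n} shifted to {0..n-1}) is v : {set 'I_n} -> bool. *)
Definition monotone_game n (v : {set 'I_n} -> bool) : Prop :=
  forall S T : {set 'I_n}, S \subset T -> (v S <= v T)%N.

Definition surjective_game n (v : {set 'I_n} -> bool) : Prop :=
  (exists S, v S = false) /\ (exists S, v S = true).

Definition simple_game n (v : {set 'I_n} -> bool) : Prop :=
  surjective_game v /\ monotone_game v.

Definition null_player n (v : {set 'I_n} -> bool) (j : 'I_n) : Prop :=
  forall S : {set 'I_n}, j \notin S -> v (j |: S) = v S.

Definition dictator n (v : {set 'I_n} -> bool) (i : 'I_n) : Prop :=
  v [set i] = true /\ forall j, j != i -> null_player v j.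

Definition psi n (v : {set 'I_n} -> bool) (j : 'I_n) : int :=
  \sum_(S : {set 'I_n} | j \notin S) ((v (j |: S) : nat)%:Z - (v S : nat)%:Z).

Definition BZI n (v : {set 'I_n} -> bool) (i : 'I_n) : rat :=
  (psi v i)%:~R / (\sum_(j : 'I_n) psi v j)%:~R.

(* Main.v *)
Require Import Defs.
From mathcomp Require Import all_boot all_order all_algebra.
From mathcomp Require Import zify.
Import GRing.Theory Num.Theory.
Local Open Scope ring_scope.
Set Implicit Arguments. Unset Strict Implicit.

Section Aux.
Variable n : nat.
Variable v : {set 'I_n} -> bool.
Hypothesis mono : monotone_game v.

Definition swing (j : 'I_n) := [set S : {set 'I_n} | (j \notin S) && v (j |: S) && ~~ v S].

Lemma psiE j : psi v j = (#|swing j|)%:Z.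
Proof.
rewrite /psi -sum1_card.
rewrite (big_morph Posz PoszD (erefl _)); rewrite big_mkcond [RHS]big_mkcond /=.
apply: eq_bigr => S _; rewrite inE.
have := @mono _ _ (subsetUr [set j] S).
case: (j \in S) => //=; case: (v S); case: (v (j |: S)) => //.
Qed.

Lemma null_union (Z : {set 'I_n}) :
  (forall j, j \in Z -> null_player v j) ->
  forall W S : {set 'I_n}, W \subset Z -> v (S :|: W) = v S.
Proof.
move=> hZ W; elim: {W}#|W| {-2}W (eqxx #|W|) => [|k IH] W hk S sWZ.
  by move: hk; rewrite cards_eq0 => /eqP ->; rewrite setU0.
have /set0Pn [x xW] : W != set0 by apply/eqP => W0; move: hk; rewrite W0 cards0.
have -> : W = x |: (W :\ x) by rewrite setD1K.
have sW'Z : W :\ x \subset Z by apply: subset_trans sWZ; apply: subsetDl.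
have hk' : #|W :\ x| == k by move: hk; rewrite (cardsD1 x W) xW add1n eqSS.
rewrite setUCA.
case xin: (x \in S :|: W :\ x).
  by rewrite (setUidPr _) ?sub1set // IH.
by rewrite hZ ?xin // ?(subsetP sWZ) // IH.
Qed.

Lemma nullD (Z : {set 'I_n}) :
  (forall j, j \in Z -> null_player v j) ->
  forall T T' : {set 'I_n}, T :\: Z = T' :\: Z -> v T = v T'.
Proof.
move=> hZ T T' e.
rewrite -(setID T Z) -(setID T' Z) setUC [X in _ = v X]setUC.
by rewrite !(null_union hZ) ?subsetIr // e.
Qed.
Lemma count_lift (Z : {set 'I_n}) p (S0 : {set 'I_n}) :
  (forall j, j \in Z -> null_player v j) -> p \notin Z -> p \notin S0 ->
  (2 ^ #|Z| <= #|[set T : {set 'I_n} | (p \notin T) && (v (p |: T) == v (p |: S0)) && (v T == v S0)]|)%N.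
Proof.
move=> hZ pZ pS0.
rewrite -card_powerset.
set S1 := S0 :\: Z.
have inj : {in powerset Z &, injective (fun W => S1 :|: W)}.
  move=> W1 W2; rewrite !inE => h1 h2 e.
  apply/setP => x; move/setP/(_ x): e.
  rewrite !inE; case: (boolP (x \in Z)) => xZ; first by [].
  have n1 : x \notin W1 := contraNN (subsetP h1 x) xZ.
  have n2 : x \notin W2 := contraNN (subsetP h2 x) xZ.
  by rewrite (negbTE n1) (negbTE n2) !orbF.
rewrite -(card_in_imset inj); apply: subset_leq_card; apply/subsetP => T /imsetP [W WZ ->].
rewrite inE in WZ; have hW := subsetP WZ.
rewrite inE; apply/andP; split; first (apply/andP; split).
- rewrite !inE negb_or; apply/andP; split; first by rewrite negb_and pS0 orbT.
  by apply/negP => /hW; rewrite (negbTE pZ).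
- apply/eqP; apply: (nullD hZ); apply/setP => x; rewrite !inE.
  case: (boolP (x \in Z)) => xZ //=; rewrite (negbTE (contraNN (@hW x) xZ)) ?orbF //.
- apply/eqP; apply: (nullD hZ); apply/setP => x; rewrite !inE.
  case: (boolP (x \in Z)) => xZ //=; rewrite (negbTE (contraNN (@hW x) xZ)) ?orbF //.
Qed.
End Aux.

Lemma arith0 (a R k z P Q : nat) :
  (a + Q <= P * Q)%N -> (k * Q <= R)%N -> (z < Q)%N -> (k < P)%N -> (k = 0 -> P = 1)%N ->
  (a * (k + z) <= (P * Q - 1) * R)%N.
Proof.
move=> h1 h2 hz hk hk0.
have mid : ((P - 1) * (k + z) <= (P * Q - 1) * k)%N.
  case: k hk hk0 h2 => [|k] hk hk0 h2.
    by rewrite hk0.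
  nia.
have ha : (a <= Q * (P - 1))%N by nia.
apply: (leq_trans (leq_mul ha (leqnn _))).
apply: (@leq_trans ((P * Q - 1) * (k * Q))).
  have := leq_mul mid (leqnn Q).
  by rewrite -mulnA (mulnC (k + z)) mulnA (mulnC Q) -[in X in (_ <= X)%N -> _]mulnA.
by apply: leq_mul.
Qed.

Lemma arith (a R k z : nat) :
  (a + 2 ^ z <= 2 ^ (k + z))%N -> (k * 2 ^ z <= R)%N ->
  (a * (k + z) <= (2 ^ (k + z) - 1) * R)%N.
Proof.
move=> h1 h2; rewrite expnD in h1 *; apply: arith0 => //; try exact: ltn_expl.
by move=> ->.
Qed.

Theorem theorem2 (n : nat) (v : {set 'I_n} -> bool) (i : 'I_n) :
  (2 <= n)%N -> simple_game v -> ~ dictator v i ->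
  (BZI v i <= ((2 ^ n.-1 - 1)%:R / (2 ^ n.-1 + n - 2)%:R : rat))%R.
Proof.
move=> n2 [[[Sf vSf] [St vSt]] mono] ndict.
set Z := [set j | (j != i) && [forall S : {set 'I_n}, (j \notin S) ==> (v (j |: S) == v S)]].
have hZ : forall j, j \in Z -> null_player v j.
  move=> j; rewrite inE => /andP [_ /forallP h] S jS.
  by have /implyP/(_ jS)/eqP := h S.
have iZ : i \notin Z by rewrite inE eqxx.
set K := [set j | (j != i) && (j \notin Z)].
set z := #|Z|.
have hA : (#|swing v i| + 2 ^ z <= 2 ^ n.-1)%N.
  have /existsP [S0 /andP [iS0 ns0]] : [exists S0 : {set 'I_n}, (i \notin S0) && ~~ (v (i |: S0) && ~~ v S0)].
    apply/contraT => /existsPn hall; exfalso; apply: ndict.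
    have hs : forall S : {set 'I_n}, i \notin S -> v (i |: S) && ~~ v S.
      by move=> S iS; have := hall S; rewrite iS /= negbK.
    split; first by have := hs set0; rewrite in_set0 setU0 => /(_ isT) /andP [].
    move=> j ji S jS.
    case: (boolP (i \in S)) => iS.
      have e : S = i |: (S :\ i) by rewrite setD1K.
      have iS' : i \notin S :\ i by rewrite !inE eqxx.
      have ijS : i \notin j |: (S :\ i) by rewrite !inE negb_or eqxx /= andbT eq_sym ji.
      rewrite e setUCA.
      by have /andP [-> _] := hs _ ijS; have /andP [-> _] := hs _ iS'.
    have ijS : i \notin j |: S by rewrite !inE negb_or eq_sym ji.
    by have /andP [_ /negbTE ->] := hs _ ijS; have /andP [_ /negbTE ->] := hs _ iS.
  have hc := count_lift hZ iZ iS0.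
  set NS := [set T | _] in hc.
  set P := powerset [set~ i].
  have cP : #|P| = (2 ^ n.-1)%N by rewrite card_powerset cardsC1 card_ord.
  have inP : forall T : {set 'I_n}, i \notin T -> T \in P.
    move=> T iT; rewrite inE; apply/subsetP => x xT; rewrite !inE.
    by apply: contraNneq iT => <-.
  have sP : swing v i \subset P.
    by apply/subsetP => T; rewrite inE => /andP [/andP [iT _] _]; apply: inP.
  have sNS : NS \subset P :\: swing v i.
    apply/subsetP => T; rewrite !inE => /andP [/andP [iT /eqP e1] /eqP e2].
    have := inP T iT; rewrite inE => ->; rewrite andbT iT /= e1 e2.
    exact: ns0.
  have := subset_leq_card sNS; rewrite cardsD (setIidPr sP) cP => h.
  have := subset_leq_card sP; rewrite cP => h'.
  rewrite -/z in hc; lia.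
have hB : forall j, j \in K -> (2 ^ z <= #|swing v j|)%N.
  move=> j; rewrite inE => /andP [ji jZ].
  have /forallPn [S0] : ~~ [forall S : {set 'I_n}, (j \notin S) ==> (v (j |: S) == v S)].
    by move: jZ; rewrite inE ji.
  rewrite negb_imply => /andP [jS0 ne].
  have m0 := @mono _ _ (subsetUr [set j] S0).
  have [v0 v1] : v S0 = false /\ v (j |: S0) = true.
    by move: m0 ne; case: (v S0); case: (v (j |: S0)).
  apply: leq_trans (count_lift hZ jZ jS0) _; apply: subset_leq_card.
  apply/subsetP => T; rewrite !inE => /andP [/andP [jT /eqP e1] /eqP e2].
  by rewrite jT e1 e2 v1 v0.
have hC : (#|K| + z = n.-1)%N.
  have -> : K = [set~ i] :\: Z by apply/setP => x; rewrite !inE andbC.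
  have sZ : Z \subset [set~ i].
    by apply/subsetP => x; rewrite !inE => /andP [].
  rewrite addnC /z -{1}(setIidPr sZ) cardsID cardsC1 card_ord //.
have sumE : \sum_(j : 'I_n) psi v j = (#|swing v i| + \sum_(j | j != i) #|swing v j|)%N%:Z.
  rewrite (eq_bigr _ (fun j _ => psiE mono j)) -(big_morph Posz PoszD (erefl _)).
  by rewrite (bigD1 i).
set R := (\sum_(j | j != i) #|swing v j|)%N in sumE.
have hR : (#|K| * 2 ^ z <= R)%N.
  rewrite -sum_nat_const; apply: (@leq_trans (\sum_(j in K) #|swing v j|)).
    by apply: leq_sum => j /hB.
  rewrite /R [X in (_ <= X)%N]big_mkcond [X in (X <= _)%N]big_mkcond /=.
  apply: leq_sum => j _.
  by case: ifP => // jK; move: (jK); rewrite inE => /andP [-> _].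
have ha := arith (eq_ind_r (fun m => (_ <= 2 ^ m)%N) hA hC) hR.
rewrite hC in ha.
rewrite /BZI psiE // sumE -!pmulrn.
set a := #|swing v i| in ha *.
have p1 : (1 <= 2 ^ n.-1)%N by rewrite expn_gt0.
have dpos : (0 < 2 ^ n.-1 + n - 2)%N by lia.
case: (posnP (a + R)) => hz.
  have -> : a = 0%N by lia.
  by rewrite mul0r divr_ge0 ?ler0n.
rewrite ler_pdivrMr ?ltr0n // mulrAC ler_pdivlMr ?ltr0n //.
rewrite -!natrM ler_nat.
have ed : (2 ^ n.-1 + n - 2 = (2 ^ n.-1 - 1) + n.-1)%N by lia.
rewrite ed; nia.
Qed.
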